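(* In the setting of the context, assume $G_{xy}^{[1]}=1$, $G_x/G_x^{[1]}\cong S_5$ and $G_x^{[1]}\cong A_4$. Then $G_e$ is isomorphic to one of $\mathrm{L}_1=\langle(1,2,3),(2,3,4),(5,6,7),(6,7,8),(1,2)(5,6),(1,5)(2,6)(3,7)(4,8)\rangle$ or $\mathrm{L}_2=\langle(1,2,3),(2,3,4),(5,6,7),(6,7,8),(1,6,2,5)(3,7)(4,8)\rangle$ (subgroups of $S_8$).
   Context: $\mathcal{A}=(G_x,G_e,G_{xy})$ is a finite, primitive amalgam of degree $(5,2)$ (no nontrivial subgroup of $G_{xy}$ normal in both $G_x$ and $G_e$; $|G_x:G_{xy}|=5$, $|G_e:G_{xy}|=2$), $G=G_x*_{G_{xy}}G_e$ acts on the coset graph (5-valent tree) $\Gamma$, $x$ is the vertex with stabiliser $G_x$, $y$ the neighbour with $G_e$ the setwise stabiliser of $\{x,y\}$ and $G_x\cap G_y=G_{xy}$. $G_z^{[1]}$ is the pointwise stabiliser of $z$ and its neighbours, $G_{xy}^{[1]}=G_x^{[1]}\cap G_y^{[1]}$. *)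

(* Defs.v *)
From HB Require Import structures.
From mathcomp Require Import all_boot all_order all_fingroup all_solvable.
Set Implicit Arguments. Unset Strict Implicit. Unset Printing Implicit Defensive.
Import GroupScope.

(* Point k (1 <= k <= 8) of {1,...,8}, encoded as the ordinal k-1 of 'I_8. *)
Definition pt (k : nat) : 'I_8 := inord k.-1.

(* The cycle (a1, a2, ..., ak), a1 -> a2 -> ... -> ak -> a1.
   With MathComp's convention (s * t) x = t (s x), this equals
   tperm a1 a2 * tperm a1 a3 * ... * tperm a1 ak. *)
Definition cyc (s : seq nat) : {perm 'I_8} :=
  match s with
  | [::] => 1
  | a :: t => foldr (fun b p => tperm (pt a) (pt b) * p) 1 t
  end.


Definition L1 : {set {perm 'I_8}} :=
  <<[set cyc [:: 1%N; 2%N; 3%N]; cyc [:: 2%N; 3%N; 4%N]; cyc [:: 5%N; 6%N; 7%N]; cyc [:: 6%N; 7%N; 8%N];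
        (cyc [:: 1%N; 2%N] * cyc [:: 5%N; 6%N])%g;
        (cyc [:: 1%N; 5%N] * cyc [:: 2%N; 6%N] * cyc [:: 3%N; 7%N] * cyc [:: 4%N; 8%N])%g]>>.

Definition L2 : {set {perm 'I_8}} :=
  <<[set cyc [:: 1%N; 2%N; 3%N]; cyc [:: 2%N; 3%N; 4%N]; cyc [:: 5%N; 6%N; 7%N]; cyc [:: 6%N; 7%N; 8%N];
        (cyc [:: 1%N; 6%N; 2%N; 5%N] * cyc [:: 3%N; 7%N] * cyc [:: 4%N; 8%N])%g]>>.

(* The amalgam (G_x, G_e, G_xy) is represented inside a finite group gT,
   with G_xy = G_x :&: G_e. *)
Definition Gxy (gT : finGroupType) (Gx Ge : {set gT}) : {set gT} := Gx :&: Ge.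

(* G_x^{[1]}: kernel of the action of G_x on the neighbours of x, i.e. on
   the cosets of G_xy in G_x; this is the core of G_xy in G_x. *)
Definition Gx1 (gT : finGroupType) (Gx Ge : {set gT}) : {set gT} :=
  gcore (Gxy Gx Ge) Gx.

(* For t in G_e \ G_xy we have y = x t, G_y = G_x^t and G_y^{[1]} = (G_x^{[1]})^t,
   so G_xy^{[1]} = G_x^{[1]} :&: (G_x^{[1]})^t. *)
Definition Gxy1 (gT : finGroupType) (Gx Ge : {set gT}) (t : gT) : {set gT} :=
  Gx1 Gx Ge :&: (Gx1 Gx Ge :^ t).

Definition primitive_amalgam (gT : finGroupType) (Gx Ge : {group gT}) : Prop :=
  forall H : {group gT}, H \subset Gxy Gx Ge -> H <| Gx -> H <| Ge -> H = 1 :> {set gT}.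

(* Main.v *)
Require Import Defs.
From HB Require Import structures.
From mathcomp Require Import all_boot all_order all_fingroup all_solvable.
From mathcomp Require Import zify.
Set Implicit Arguments. Unset Strict Implicit. Unset Printing Implicit Defensive.
Import GroupScope.

Section Code.
Variable n : nat.
Definition code (p : {perm 'I_n.+1}) : seq nat :=
  mkseq (fun k => nat_of_ord (p (inord k))) n.+1.
Definition cmul (u v : seq nat) := [seq nth 0 v k | k <- u].
Definition idc := iota 0 n.+1.
Definition ctp (a b : nat) := mkseq (fun k => if k == a then b else if k == b then a else k) n.+1.

Lemma size_code p : size (code p) = n.+1.
Proof. by rewrite size_mkseq. Qed.

Lemma nth_code p (i : 'I_n.+1) : nth 0 (code p) i = p i.
Proof. by rewrite nth_mkseq // inord_val. Qed.

Lemma code_inj : injective code.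
Proof.
move=> p q e; apply/permP => i; apply/val_inj.
by rewrite /= -!nth_code e.
Qed.

Lemma codeM p q : code (p * q) = cmul (code p) (code q).
Proof.
rewrite /cmul /code /mkseq -map_comp; apply/eq_in_map => k; rewrite mem_iota /= => lt.
by rewrite permM -(nth_code q).
Qed.

Lemma code1 : code 1 = idc.
Proof.
rewrite /code /idc /mkseq; rewrite -[in RHS](map_id (iota 0 n.+1)).
apply/eq_in_map => k; rewrite mem_iota /= => lt.
by rewrite perm1 inordK.
Qed.

Lemma code_tperm a b : a <= n -> b <= n ->
  code (tperm (inord a) (inord b)) = ctp a b.
Proof.
move=> ha hb; rewrite /code /ctp /mkseq; apply/eq_in_map => k.
rewrite mem_iota /= => lt.
have inj : forall x y, x <= n -> y <= n -> inord x = inord y :> 'I_n.+1 -> x = y.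
  by move=> x y hx hy e; have := congr1 val e; rewrite /= !inordK.
case: tpermP => [e|e|na nb].
- by have -> := inj _ _ lt ha e; rewrite inordK // eqxx.
- have -> := inj _ _ lt hb e; rewrite inordK //.
  by case: eqP => // _; rewrite eqxx.
- rewrite inordK //.
  have -> : (k == a) = false by apply/eqP => ee; apply: na; rewrite ee.
  have -> : (k == b) = false by apply/eqP => ee; apply: nb; rewrite ee.
  done.
Qed.

Lemma code_perms p : code p \in permutations idc.
Proof.
rewrite mem_permutations; apply: uniq_perm.
- rewrite /code map_inj_in_uniq ?iota_uniq // => i j.
  rewrite !mem_iota /= => hi hj e.
  have := perm_inj (val_inj e); move/(congr1 val); rewrite /= !inordK //.
- exact: iota_uniq.
- move=> k; rewrite /idc mem_iota /= add0n /code /mkseq; apply/mapP/idP.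
  + by case=> i _ ->; rewrite ltn_ord.
  + move=> lt; have [q qe] : exists q, p q = inord k by exists (p^-1 (inord k)); rewrite permKV.
    exists (val q); first by rewrite mem_iota /= ltn_ord.
    by rewrite inord_val qe inordK.
Qed.

Fixpoint addnew (acc l : seq (seq nat)) : seq (seq nat) :=
  match l with
  | [::] => acc
  | c :: l' => if c \in acc then addnew acc l' else addnew (c :: acc) l'
  end.

Lemma mem_addnew acc l c : (c \in addnew acc l) = (c \in acc) || (c \in l).
Proof.
elim: l acc => [|d l IH] acc /=; first by rewrite orbF.
case: ifP => hd; rewrite IH in_cons.
  by case: eqP => [->|_]; rewrite ?hd //.
by rewrite in_cons; case: (c == d); rewrite ?orbT.
Qed.

Lemma uniq_addnew acc l : uniq acc -> uniq (addnew acc l).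
Proof.
elim: l acc => [|d l IH] acc //= ua; case: ifP => hd; apply: IH => //=.
by rewrite hd.
Qed.

Definition bstep (gs : seq (seq nat)) (p : seq (seq nat) * seq (seq nat)) :=
  let al := addnew p.1 [seq cmul c g | c <- p.2, g <- gs] in
  (al, take (size al - size p.1) al).

Definition bfs gs k := (iter k (bstep gs) ([:: idc], [:: idc])).1.

Lemma bfs_inv gs k (P : seq nat -> Prop) :
  P idc -> (forall c g, P c -> g \in gs -> P (cmul c g)) ->
  (forall c, c \in (iter k (bstep gs) ([:: idc], [:: idc])).1 -> P c) /\
  {subset (iter k (bstep gs) ([:: idc], [:: idc])).2 <= (iter k (bstep gs) ([:: idc], [:: idc])).1}.
Proof.
move=> P1 PM; elim: k => [|k [IH1 IH2]] /=.
  by split => // c; rewrite inE => /eqP ->.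
split; last by move=> c /mem_take.
move=> c; rewrite mem_addnew => /orP[/IH1 //|].
case/allpairsP => [[c1 g]] /= [hc1 hg ->]; apply: PM => //; apply: IH1; exact: IH2.
Qed.

Lemma bfs_uniq gs k : uniq (bfs gs k).
Proof. rewrite /bfs; elim: k => [|k IH] //=; exact: uniq_addnew. Qed.

Lemma bfs_idc gs k : idc \in bfs gs k.
Proof. rewrite /bfs; elim: k => [|k IH] /=; by rewrite ?inE ?mem_addnew ?IH. Qed.

Lemma realize (S : seq {perm 'I_n.+1}) k c :
  c \in bfs (map code S) k ->
  exists2 p, p \in <<[set x in S]>> & code p = c.
Proof.
have [] := @bfs_inv (map code S) k (fun c => exists2 p, p \in <<[set x in S]>> & code p = c).
- by exists 1; rewrite ?group1 ?code1.
- move=> c1 g [p hp <-] /mapP[s hs ->]; exists (p * s); last by rewrite codeM.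
  by rewrite groupM // mem_gen // inE.
by move=> H _; apply: H.
Qed.

Lemma gclosure (S : seq {perm 'I_n.+1}) l :
  idc \in l -> all (fun c => all (fun g => cmul c g \in l) (map code S)) l ->
  forall p, p \in <<[set x in S]>> -> code p \in l.
Proof.
move=> h1 hcl.
pose U := [set u : {perm 'I_n.+1} | [forall q : {perm 'I_n.+1}, (code q \in l) ==> (code (q * u) \in l)]].
have gU : group_set U.
  apply/andP; split; first by rewrite inE; apply/forallP => q; rewrite mulg1 implybb.
  apply/subsetP => w /mulsgP[u v]; rewrite !inE => /forallP hu /forallP hv ->.
  apply/forallP => q; apply/implyP => hq.
  by rewrite mulgA; have := hv (q * u); rewrite (implyP (hu q) hq).
have sSU : <<[set x in S]>> \subset (Group gU).
  rewrite gen_subG; apply/subsetP => s; rewrite inE => hs.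
  rewrite inE; apply/forallP => q; apply/implyP => hq.
  rewrite codeM; have := allP hcl _ hq => /allP; apply; exact: map_f.
move=> p hp; have := subsetP sSU p hp; rewrite inE => /forallP/(_ 1).
by rewrite mul1g code1 h1.
Qed.

Lemma card_gen_code (S : seq {perm 'I_n.+1}) k (l := bfs (map code S) k) :
  all (fun c => all (fun g => cmul c g \in l) (map code S)) l ->
  #|<<[set x in S]>>| = size l /\ forall p, (p \in <<[set x in S]>>) = (code p \in l).
Proof.
move=> hcl.
have h1 : idc \in l by apply: bfs_idc.
have hmem : forall p, (p \in <<[set x in S]>>) = (code p \in l).
  move=> p; apply/idP/idP; first exact: gclosure.
  by case/realize => q hq /code_inj <-.
split => //.
have ul : uniq l by apply: bfs_uniq.
apply/eqP; rewrite eqn_leq; apply/andP; split.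
  rewrite cardE -(size_map code); apply: uniq_leq_size.
    by rewrite map_inj_uniq ?enum_uniq //; apply: code_inj.
  by move=> c /mapP[p]; rewrite mem_enum hmem => ? ->.
rewrite cardE -(size_map code); apply: uniq_leq_size => // c hc.
by have [p hp <-] := realize hc; apply: map_f; rewrite mem_enum.
Qed.

End Code.

Lemma inord_neq n a b : a <= n -> b <= n -> a != b -> inord a != inord b :> 'I_n.+1.
Proof.
move=> ha hb nab; apply/eqP => /(congr1 val); rewrite /= !inordK //.
by apply/eqP.
Qed.

Definition x4 : {perm 'I_4} := tperm (inord 0) (inord 1) * tperm (inord 0) (inord 2).
Definition y4 : {perm 'I_4} := tperm (inord 1) (inord 2) * tperm (inord 1) (inord 3).

Lemma x4_Alt : x4 \in 'Alt_('I_4).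
Proof. by rewrite Alt_even odd_permM !odd_tperm !inord_neq. Qed.
Lemma y4_Alt : y4 \in 'Alt_('I_4).
Proof. by rewrite Alt_even odd_permM !odd_tperm !inord_neq. Qed.


Lemma order3 (T : finType) (x : {perm T}) : x ^+ 3 = 1 -> x != 1 -> #[x] = 3.
Proof.
move=> h3 h1; have : #[x] %| 3 by rewrite order_dvdn h3.
have : #[x] != 1%N by rewrite order_eq1.
move: #[x] => m nm1; rewrite dvdn_divisors // !inE => /orP[/eqP e|/eqP //].
by rewrite e in nm1.
Qed.

Lemma x4_order : #[x4] = 3.
Proof.
apply: order3.
  apply: (@code_inj 3); rewrite !expgS expg0 mulg1 /x4 !codeM code1 !code_tperm //.
apply/eqP => /(congr1 (@code 3)); rewrite /x4 !codeM code1 !code_tperm //.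
Qed.

Lemma y4_notin : y4 \notin <[x4]>.
Proof.
apply/negP => /cyclePmin[i]; rewrite x4_order.
case: i => [|[|[|i]]] // _; rewrite ?expg0 ?expg1 ?expgS ?expg1 => /(congr1 (@code 3));
  rewrite /x4 /y4 !codeM ?code1 !code_tperm //.
Qed.

Section A4.
Variables (gT : finGroupType) (K : {group gT}).
Hypothesis isoK : K \isog 'Alt_('I_4).

Lemma cardK : #|K| = 12.
Proof.
rewrite (card_isog isoK); have := card_Alt (T := 'I_4); rewrite card_ord => /(_ isT).
by move=> h; apply/eqP; rewrite -(eqn_pmul2l (isT : 0 < 2)) h.
Qed.

Lemma SylK (P : {group gT}) : (P \in 'Syl_3(K)) = (P \subset K) && (#|P| == 3).
Proof. by rewrite inE pHallE cardK p_part. Qed.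

Lemma two_Syl : exists P1 P2 : {group gT}, [/\ P1 \in 'Syl_3(K), P2 \in 'Syl_3(K) & P1 != P2].
Proof.
case/isogP: isoK => f injf fK.
have : x4 \in f @* K by rewrite fK x4_Alt.
case/morphimP => x _ xK ex.
have : y4 \in f @* K by rewrite fK y4_Alt.
case/morphimP => y _ yK ey.
exists <[x]>%G, <[y]>%G; split.
- by rewrite SylK cycle_subG xK /= -orderE -(order_injm injf) // -ex x4_order.
- rewrite SylK cycle_subG yK /= -orderE -(order_injm injf) // -ey.
  apply/eqP; apply: order3.
    apply: (@code_inj 3); rewrite !expgS expg0 mulg1 /y4 !codeM code1 !code_tperm //.
  apply/eqP => /(congr1 (@code 3)); rewrite /y4 !codeM code1 !code_tperm //.
- apply/eqP => e; have : f @* <[x]> = f @* <[y]> by rewrite -[<[x]>]/(gval <[x]>%G) e.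
  rewrite !morphim_cycle // -ex -ey => e2.
  by have := y4_notin; rewrite e2 cycle_id.
Qed.

Lemma card_SylK : #|'Syl_3(K)| = 4.
Proof.
have hd := card_Syl_dvd 3 K; have hm := card_Syl_mod K (isT : prime 3).
have h2 : 1 < #|'Syl_3(K)|.
  have [P1 [P2 [h1 h2 n12]]] := two_Syl.
  rewrite (cardD1 P1) h1 ltnS lt0n; apply/existsP; exists P2; rewrite !inE eq_sym n12 /=; by move: h2; rewrite inE.
move: hd hm h2; rewrite cardK; move: #|_| => m.
rewrite dvdn_divisors //= !inE.
by case/or3P => [/eqP ->|/eqP ->|/or3P [/eqP ->|/eqP ->|/orP[/eqP ->|/eqP ->]]].
Qed.

Lemma normSylK (P : {group gT}) : P \in 'Syl_3(K) -> 'N_K(P) = P.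
Proof.
move=> hP; have := hP; rewrite inE => /card_Syl; rewrite card_SylK => hi.
have := Lagrange (subsetIl K 'N(P)); rewrite -hi cardK => hc.
move: hP; rewrite SylK => /andP[sPK /eqP cP].
apply/eqP; rewrite eq_sym eqEcard subsetI sPK normG cP /=.
by rewrite -(leq_pmul2r (isT : 0 < 4)) hc.
Qed.

Lemma faithK k : k \in K -> (forall P : {group gT}, P \in 'Syl_3(K) -> k \in 'N(P)) -> k = 1.
Proof.
move=> kK hk; have [P1 [P2 [h1 h2 n12]]] := two_Syl.
have k1 : k \in P1 by rewrite -(normSylK h1) inE kK hk.
have k2 : k \in P2 by rewrite -(normSylK h2) inE kK hk.
have : P1 :&: P2 = 1.
  apply: prime_TIg; first by move: h1; rewrite SylK => /andP[_ /eqP ->].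
  apply/negP => s12; move: n12; rewrite -val_eqE /= eqEcard s12.
  by move: h1 h2; rewrite !SylK => /andP[_ /eqP ->] /andP[_ /eqP ->].
by move/setP/(_ k); rewrite !inE k1 k2 => /esym/eqP.
Qed.

End A4.

Lemma S5cent (z : {perm 'I_5}) : z != 1 -> #|'C[z]| < 24.
Proof.
move=> nz1.
have key : #|'C[z]| <= count (fun c => cmul c (code z) == cmul (code z) c) (permutations (idc 4)).
  rewrite -size_filter cardE -(size_map (@code 4)); apply: uniq_leq_size.
    by rewrite map_inj_uniq ?enum_uniq //; apply: code_inj.
  move=> c /mapP[p]; rewrite mem_enum => /cent1P hp ->.
  by rewrite mem_filter code_perms -!codeM hp eqxx.
have comp : all (fun cz => (cz == idc 4) ||
   (count (fun c => cmul c cz == cmul cz c) (permutations (idc 4)) < 24)) (permutations (idc 4)).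
  by vm_compute.
have := allP comp _ (code_perms z).
have e : (code z == idc 4) = false by rewrite -code1 (inj_eq (@code_inj 4)) (negbTE nz1).
rewrite e orFb => h.
exact: (leq_ltn_trans key h).
Qed.

Definition cfold (a : nat) (l : seq nat) : seq nat :=
  foldr (fun b c => cmul (ctp 7 a.-1 b.-1) c) (idc 7) l.

Lemma code_cyc a l : 0 < a <= 8 -> all (fun b => 0 < b <= 8) l ->
  code (cyc (a :: l)) = cfold a l.
Proof.
move=> /andP[_ ha]; elim: l => [|b l IH] /=; first by rewrite code1.
case/andP => /andP[_ hb] hl; rewrite codeM IH // code_tperm //.
- by case: a ha {IH} => // a; rewrite ltnS.
- by case: b hb {hl} => // b; rewrite ltnS.
Qed.

Lemma code_tpt a b : a <= 8 -> b <= 8 -> code (tperm (pt a) (pt b)) = ctp 7 a.-1 b.-1.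
Proof.
move=> ha hb; rewrite code_tperm //.
- by case: a ha => // a; rewrite ltnS.
- by case: b hb => // b; rewrite ltnS.
Qed.

Definition S1 : seq {perm 'I_8} := [:: cyc [:: 1%N; 2%N; 3%N]; cyc [:: 2%N; 3%N; 4%N]; cyc [:: 5%N; 6%N; 7%N]; cyc [:: 6%N; 7%N; 8%N];
        (cyc [:: 1%N; 2%N] * cyc [:: 5%N; 6%N])%g;
        (cyc [:: 1%N; 5%N] * cyc [:: 2%N; 6%N] * cyc [:: 3%N; 7%N] * cyc [:: 4%N; 8%N])%g].

Lemma L1E : L1 = <<[set x in S1]>>.
Proof. rewrite /L1; f_equal; apply/setP => x; rewrite !inE /= ?orbA //. Qed.

Definition cS1 := [:: cfold 1 [:: 2; 3]; cfold 2 [:: 3; 4]; cfold 5 [:: 6;7]; cfold 6 [:: 7;8];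
   cmul (cfold 1 [:: 2]) (cfold 5 [:: 6]);
   cmul (cmul (cmul (cfold 1 [:: 5]) (cfold 2 [:: 6])) (cfold 3 [:: 7])) (cfold 4 [:: 8])].

Lemma cS1E : map (@code 7) S1 = cS1.
Proof. rewrite /S1 !map_cons !codeM !code1 !code_tpt //. Qed.


Lemma gen_facts (S : seq {perm 'I_8}) cS k :
  map (@code 7) S = cS ->
  (let l := bfs 7 cS k in all (fun c => all (fun g => cmul c g \in l) cS) l) ->
  #|<<[set x in S]>>| = size (bfs 7 cS k) /\
  forall p, (p \in <<[set x in S]>>) = (code p \in bfs 7 cS k).
Proof. by move=> <- h; apply: card_gen_code. Qed.

Definition S2 : seq {perm 'I_8} := [:: cyc [:: 1%N; 2%N; 3%N]; cyc [:: 2%N; 3%N; 4%N]; cyc [:: 5%N; 6%N; 7%N]; cyc [:: 6%N; 7%N; 8%N];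
        (cyc [:: 1%N; 6%N; 2%N; 5%N] * cyc [:: 3%N; 7%N] * cyc [:: 4%N; 8%N])%g].

Lemma L2E : L2 = <<[set x in S2]>>.
Proof. rewrite /L2; f_equal; apply/setP => x; rewrite !inE /= ?orbA //. Qed.

Definition cS2 := [:: cfold 1 [:: 2; 3]; cfold 2 [:: 3; 4]; cfold 5 [:: 6;7]; cfold 6 [:: 7;8];
   cmul (cmul (cfold 1 [:: 6; 2; 5]) (cfold 3 [:: 7])) (cfold 4 [:: 8])].

Lemma cS2E : map (@code 7) S2 = cS2.
Proof. rewrite /S2 !map_cons !codeM !code1 !code_tpt //. Qed.

Definition SA0 : seq {perm 'I_8} := [:: cyc [:: 1%N; 2%N; 3%N]; cyc [:: 2%N; 3%N; 4%N]].
Definition SB0 : seq {perm 'I_8} := [:: cyc [:: 5%N; 6%N; 7%N]; cyc [:: 6%N; 7%N; 8%N]].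
Definition SE : seq {perm 'I_8} := SA0 ++ SB0.
Definition SW1 : seq {perm 'I_8} := [:: cyc [:: 1%N; 2%N]; cyc [:: 2%N; 3%N]; cyc [:: 3%N; 4%N]].
Definition SW2 : seq {perm 'I_8} := [:: cyc [:: 5%N; 6%N]; cyc [:: 6%N; 7%N]; cyc [:: 7%N; 8%N]].

Definition cSA0 := [:: cfold 1 [:: 2; 3]; cfold 2 [:: 3; 4]].
Definition cSB0 := [:: cfold 5 [:: 6;7]; cfold 6 [:: 7;8]].
Definition cSE := cSA0 ++ cSB0.
Definition cSW1 := [:: cfold 1 [:: 2]; cfold 2 [:: 3]; cfold 3 [:: 4]].
Definition cSW2 := [:: cfold 5 [:: 6]; cfold 6 [:: 7]; cfold 7 [:: 8]].

Lemma cSA0E : map (@code 7) SA0 = cSA0.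
Proof. rewrite /SA0 !map_cons !codeM !code1 !code_tpt //. Qed.
Lemma cSB0E : map (@code 7) SB0 = cSB0.
Proof. rewrite /SB0 !map_cons !codeM !code1 !code_tpt //. Qed.
Lemma cSEE : map (@code 7) SE = cSE.
Proof. by rewrite map_cat cSA0E cSB0E. Qed.
Lemma cSW1E : map (@code 7) SW1 = cSW1.
Proof. rewrite /SW1 !map_cons !codeM !code1 !code_tpt //. Qed.
Lemma cSW2E : map (@code 7) SW2 = cSW2.
Proof. rewrite /SW2 !map_cons !codeM !code1 !code_tpt //. Qed.

Definition l1 := bfs 7 cS1 12.
Definition l2 := bfs 7 cS2 12.
Definition lA0 := bfs 7 cSA0 6.
Definition lB0 := bfs 7 cSB0 6.
Definition lE := bfs 7 cSE 10.
Definition lW1 := bfs 7 cSW1 8.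
Definition lW2 := bfs 7 cSW2 8.

Lemma L1_facts : #|L1| = 576 /\ forall p, (p \in L1) = (code p \in l1).
Proof.
rewrite L1E; have c : (let l := bfs 7 cS1 12 in all (fun c => all (fun g => cmul c g \in l) cS1) l) by vm_compute.
have [h1 h2] := gen_facts (k:=12) cS1E c.
split; last exact: h2.
rewrite h1; by vm_compute.
Qed.
Lemma L2_facts : #|L2| = 576 /\ forall p, (p \in L2) = (code p \in l2).
Proof.
rewrite L2E; have c : (let l := bfs 7 cS2 12 in all (fun c => all (fun g => cmul c g \in l) cS2) l) by vm_compute.
have [h1 h2] := gen_facts (k:=12) cS2E c.
split; last exact: h2.
rewrite h1; by vm_compute.
Qed.
Lemma A0_facts : #|<<[set x in SA0]>>| = 12 /\ forall p, (p \in <<[set x in SA0]>>) = (code p \in lA0).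
Proof.
have c : (let l := bfs 7 cSA0 6 in all (fun c => all (fun g => cmul c g \in l) cSA0) l) by vm_compute.
have [h1 h2] := gen_facts (k:=6) cSA0E c.
split; last exact: h2.
rewrite h1; by vm_compute.
Qed.
Lemma B0_facts : #|<<[set x in SB0]>>| = 12 /\ forall p, (p \in <<[set x in SB0]>>) = (code p \in lB0).
Proof.
have c : (let l := bfs 7 cSB0 6 in all (fun c => all (fun g => cmul c g \in l) cSB0) l) by vm_compute.
have [h1 h2] := gen_facts (k:=6) cSB0E c.
split; last exact: h2.
rewrite h1; by vm_compute.
Qed.
Lemma E_facts : forall p, (p \in <<[set x in SE]>>) = (code p \in lE).
Proof.
have c : (let l := bfs 7 cSE 10 in all (fun c => all (fun g => cmul c g \in l) cSE) l) by vm_compute.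
have [h1 h2] := gen_facts (k:=10) cSEE c.
exact: h2.
Qed.
Lemma W1_facts : #|<<[set x in SW1]>>| = 24 /\ forall p, (p \in <<[set x in SW1]>>) = (code p \in lW1).
Proof.
have c : (let l := bfs 7 cSW1 8 in all (fun c => all (fun g => cmul c g \in l) cSW1) l) by vm_compute.
have [h1 h2] := gen_facts (k:=8) cSW1E c.
split; last exact: h2.
rewrite h1; by vm_compute.
Qed.
Lemma W2_facts : #|<<[set x in SW2]>>| = 24 /\ forall p, (p \in <<[set x in SW2]>>) = (code p \in lW2).
Proof.
have c : (let l := bfs 7 cSW2 8 in all (fun c => all (fun g => cmul c g \in l) cSW2) l) by vm_compute.
have [h1 h2] := gen_facts (k:=8) cSW2E c.
split; last exact: h2.
rewrite h1; by vm_compute.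
Qed.


Lemma lE_real e : e \in lE -> exists2 p, p \in <<[set x in SE]>> & code p = e.
Proof. by rewrite /lE -cSEE; apply: realize. Qed.

Definition blk (p : {perm 'I_8}) := forall i : 'I_8, (i < 4) = (p i < 4).
Definition swp (p : {perm 'I_8}) := forall i : 'I_8, (i < 4) = ~~ (p i < 4).

Lemma code_split (p : {perm 'I_8}) : code p =
  [seq nat_of_ord (p (inord k)) | k <- iota 0 4] ++ [seq nat_of_ord (p (inord k)) | k <- iota 4 4].
Proof. by rewrite /code /mkseq (iotaD 0 4 4) map_cat. Qed.

Lemma perm_of_map (s2 : seq nat) (f : nat -> nat) (s : seq nat) :
  {in s &, injective f} -> uniq s -> uniq s2 -> {subset map f s <= s2} ->
  size s2 <= size s -> map f s \in permutations s2.
Proof.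
move=> fi us us2 hs hsz; have um : uniq (map f s) by rewrite map_inj_in_uniq.
rewrite mem_permutations; apply: uniq_perm => //.
by apply: (uniq_min_size um hs _).2; rewrite size_map.
Qed.

Lemma inord_lt4 k : k < 8 -> (inord k : 'I_8) < 4 = (k < 4).
Proof. by move=> hk; rewrite inordK. Qed.

Lemma pinj (p : {perm 'I_8}) m : m + 4 <= 8 ->
  {in iota m 4 &, injective (fun k => nat_of_ord (p (inord k)))}.
Proof.
move=> hm i j; rewrite !mem_iota => /andP[_ hi] /andP[_ hj] /val_inj /perm_inj.
move/(congr1 val); rewrite /= !inordK //.
- exact: leq_trans hj hm.
- exact: leq_trans hi hm.
Qed.

Lemma block_lo (p : {perm 'I_8}) : (forall i : 'I_8, i < 4 -> p i < 4) ->
  [seq nat_of_ord (p (inord k)) | k <- iota 0 4] \in permutations (iota 0 4).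
Proof.
move=> h; apply: perm_of_map; rewrite ?iota_uniq ?size_iota //; first exact: pinj.
move=> x /mapP[k]; rewrite !mem_iota /= => hk ->; rewrite h //.
by rewrite inord_lt4 // (ltn_trans hk).
Qed.

Lemma block_hi (p : {perm 'I_8}) : (forall i : 'I_8, ~~ (i < 4) -> ~~ (p i < 4)) ->
  [seq nat_of_ord (p (inord k)) | k <- iota 4 4] \in permutations (iota 4 4).
Proof.
move=> h; apply: perm_of_map; rewrite ?iota_uniq ?size_iota //; first exact: pinj.
move=> x /mapP[k]; rewrite !mem_iota /= => /andP[h4 hk] ->; rewrite ltn_ord andbT.
by rewrite leqNgt h // inord_lt4 // -leqNgt.
Qed.

Lemma block_lo' (p : {perm 'I_8}) : (forall i : 'I_8, i < 4 -> ~~ (p i < 4)) ->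
  [seq nat_of_ord (p (inord k)) | k <- iota 0 4] \in permutations (iota 4 4).
Proof.
move=> h; apply: perm_of_map; rewrite ?iota_uniq ?size_iota //; first exact: pinj.
move=> x /mapP[k]; rewrite !mem_iota /= => hk ->; rewrite ltn_ord andbT.
by rewrite leqNgt h // inord_lt4 // (ltn_trans hk).
Qed.

Lemma block_hi' (p : {perm 'I_8}) : (forall i : 'I_8, ~~ (i < 4) -> p i < 4) ->
  [seq nat_of_ord (p (inord k)) | k <- iota 4 4] \in permutations (iota 0 4).
Proof.
move=> h; apply: perm_of_map; rewrite ?iota_uniq ?size_iota //; first exact: pinj.
move=> x /mapP[k]; rewrite !mem_iota /= => /andP[h4 hk] ->.
by rewrite h // inord_lt4 // -leqNgt.
Qed.

Definition blkcodes := [seq x ++ y | x <- permutations (iota 0 4), y <- permutations (iota 4 4)].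
Definition swpcodes := [seq x ++ y | x <- permutations (iota 4 4), y <- permutations (iota 0 4)].

Lemma code_blk p : blk p -> code p \in blkcodes.
Proof.
move=> h; rewrite code_split; apply: allpairs_f.
- by apply: block_lo => i; rewrite -h.
- by apply: block_hi => i; rewrite -h.
Qed.

Lemma code_swp p : swp p -> code p \in swpcodes.
Proof.
move=> h; rewrite code_split; apply: allpairs_f.
- by apply: block_lo' => i; rewrite -h.
- by apply: block_hi' => i; rewrite h negbK.
Qed.

Lemma fix_hi (p : {perm 'I_8}) : drop 4 (code p) = iota 4 4 -> forall i : 'I_8, ~~ (i < 4) -> p i = i.
Proof.
move=> e i hi; have h4 : 4 <= i by rewrite leqNgt.
apply/val_inj; rewrite /= -nth_code -(subnKC h4) -nth_drop e nth_iota //.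
by rewrite ltn_subLR // addn4.
Qed.

Lemma fix_lo (p : {perm 'I_8}) : take 4 (code p) = iota 0 4 -> forall i : 'I_8, i < 4 -> p i = i.
Proof.
move=> e i hi; apply/val_inj; rewrite /= -nth_code -(nth_take _ hi) e nth_iota //.
Qed.

Lemma code_fixhi (p : {perm 'I_8}) : (forall i : 'I_8, i < 4 -> p i < 4) ->
  (forall i : 'I_8, ~~ (i < 4) -> p i = i) ->
  code p \in [seq x ++ iota 4 4 | x <- permutations (iota 0 4)].
Proof.
move=> h1 h2; rewrite code_split; apply/mapP; exists [seq nat_of_ord (p (inord k)) | k <- iota 0 4].
  exact: block_lo.
congr (_ ++ _); rewrite -[RHS]map_id; apply/eq_in_map => k; rewrite mem_iota /= => /andP[h4 hk].
by rewrite h2 ?inordK // ?inord_lt4 // -leqNgt ?(leq_trans hk).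
Qed.

Lemma code_fixlo (p : {perm 'I_8}) : (forall i : 'I_8, ~~ (i < 4) -> ~~ (p i < 4)) ->
  (forall i : 'I_8, i < 4 -> p i = i) ->
  code p \in [seq iota 0 4 ++ y | y <- permutations (iota 4 4)].
Proof.
move=> h1 h2; rewrite code_split; apply/mapP; exists [seq nat_of_ord (p (inord k)) | k <- iota 4 4].
  exact: block_hi.
congr (_ ++ _); rewrite -[RHS]map_id; apply/eq_in_map => k; rewrite mem_iota /= => hk.
by rewrite h2 ?inordK // ?inord_lt4 // ?(ltn_trans hk).
Qed.

Lemma chk_blk : let L1 := l1 in let L2 := l2 in let A0 := lA0 in let B0 := lB0 in let E := lE in
  all (fun c => [|| (c \in L1) && (c \in L2),
       has (fun e => (drop 4 (cmul c e) == iota 4 4) && (cmul c e \notin A0)) E |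
       has (fun e => (take 4 (cmul c e) == iota 0 4) && (cmul c e \notin B0)) E]) blkcodes.
Proof. vm_compute. exact isT. Qed.

Lemma chk_swp : let L1 := l1 in let L2 := l2 in
  all (fun c => (c \in L1) || (c \in L2)) swpcodes.
Proof. vm_compute; exact isT. Qed.

Lemma chk_W1 : let W := lW1 in all (fun c => c \in W) [seq x ++ iota 4 4 | x <- permutations (iota 0 4)].
Proof. vm_compute; exact isT. Qed.
Lemma chk_W2 : let W := lW2 in all (fun c => c \in W) [seq iota 0 4 ++ y | y <- permutations (iota 4 4)].
Proof. vm_compute; exact isT. Qed.

Lemma idx2_3 (T : finGroupType) (K G : {group T}) x :
  K \subset G -> #|G| = (2 * #|K|)%N -> x \in G -> x ^+ 3 = 1 -> x \in K.
Proof.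
move=> sKG cG xG h3; apply/negPn/negP => xK.
have hi : #|G : K| = 2 by rewrite -divgS // cG mulnK // cardG_gt0.
have e1 := rcoset_index2 sKG hi (_ : x^-1 \in G :\: K).
have : x \in K :* x^-1 by rewrite e1 ?inE ?xK ?xG // groupV xK groupV xG.
rewrite mem_rcoset invgK => xx.
have e : (x * x)^-1 = x.
  apply: (mulgI (x * x)); rewrite mulgV -h3 !expgS expg0 mulg1 mulgA //.
by move: xK; rewrite -e groupV xx.
Qed.

Opaque l1 l2 lA0 lB0 lE lW1 lW2 blkcodes swpcodes bfs L1 L2.

Section Main.
Variables (gT : finGroupType) (Gx Ge : {group gT}) (t : gT).
Hypotheses (hix : #|Gx : Gxy Gx Ge| = 5%N) (hie : #|Ge : Gxy Gx Ge| = 2%N)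
  (ht : t \in Ge :\: Gx) (h1 : Gxy1 Gx Ge t = 1)
  (hS5 : Gx / Gx1 Gx Ge \isog 'Sym_('I_5)) (hA4 : Gx1 Gx Ge \isog 'Alt_('I_4)).

Local Notation H := (Gx :&: Ge)%G.
Local Notation A := (gcore_group (Gx :&: Ge) Gx).
Local Notation B := (A :^ t)%G.

Lemma sHGe : H \subset Ge. Proof. exact: subsetIr. Qed.
Lemma sHGx : H \subset Gx. Proof. exact: subsetIl. Qed.
Lemma tGe : t \in Ge. Proof. by case/setDP: ht. Qed.
Lemma tNH : t \notin H. Proof. by case/setDP: ht => _; apply: contra => /setIP[]. Qed.
Lemma sAH : A \subset H. Proof. exact: gcore_sub. Qed.
Lemma nAGx : Gx \subset 'N(A). Proof. exact: gcore_norm. Qed.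
Lemma nAH : H \subset 'N(A). Proof. exact: subset_trans sHGx nAGx. Qed.
Lemma cardA : #|A| = 12. Proof. exact: cardK hA4. Qed.

Lemma cardGx : #|Gx| = 1440.
Proof.
have := card_isog hS5; rewrite card_Sym card_ord card_quotient ?nAGx // => hq.
by rewrite -(Lagrange (subset_trans sAH sHGx)) hq cardA.
Qed.

Lemma cardH : #|H| = 288.
Proof.
have := Lagrange sHGx; rewrite cardGx [#|Gx : _|]hix => e.
by apply/eqP; rewrite -(eqn_pmul2r (isT : 0 < 5)) e.
Qed.

Lemma cardGe : #|Ge| = 576.
Proof. by rewrite -(Lagrange sHGe) cardH [#|Ge : _|]hie. Qed.

Lemma nHGe : Ge \subset 'N(H).
Proof. by case/andP: (index2_normal sHGe hie). Qed.

Lemma outH g : g \in Ge -> g \notin H -> H :* g = Ge :\: H.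
Proof. by move=> hg hn; apply: rcoset_index2 sHGe hie _; rewrite inE hg hn. Qed.

Lemma cos1 g : g \in Ge -> g \notin H -> g * t^-1 \in H.
Proof.
by move=> hg hn; rewrite -mem_rcoset (outH tGe tNH) inE hg hn.
Qed.

Lemma cos2 g : g \in Ge -> g \notin H -> t * g \in H.
Proof.
move=> hg hn; have : t \in H :* g^-1.
  by rewrite (outH (groupVr hg)) ?groupV // inE tGe tNH.
by rewrite mem_rcoset invgK.
Qed.

Lemma cos3 g : g \in Ge -> g \notin H -> t^-1 * g \in H.
Proof.
move=> hg hn; have : g^-1 \in H :* t^-1.
  by rewrite (outH (groupVr tGe)) ?groupV ?tNH // inE !groupV hg hn.
by rewrite mem_rcoset invgK -groupV invMg invgK.
Qed.

Lemma ttH : t * t \in H. Proof. exact: cos2 tGe tNH. Qed.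

Lemma tnH h : h \in H -> (h ^ t \in H) * (h ^ t^-1 \in H).
Proof.
move=> hh; split; rewrite memJ_norm //; apply: (subsetP nHGe); rewrite ?groupV tGe //.
Qed.

Lemma sBH : B \subset H.
Proof.
by rewrite -(normP (subsetP nHGe _ tGe)) conjSg sAH.
Qed.

Lemma nBH : H \subset 'N(B).
Proof.
by rewrite normJ -(normP (subsetP nHGe _ tGe)) conjSg nAH.
Qed.

Lemma tiAB : A :&: B = 1.
Proof. exact: h1. Qed.

Lemma cAB a b : a \in A -> b \in B -> commute a b.
Proof.
move=> ha hb; apply/commgP.
suff : [~ a, b] \in A :&: B by rewrite tiAB inE.
rewrite inE; apply/andP; split.
- by rewrite commgEl groupM ?groupV // memJ_norm // (subsetP nAH) // (subsetP sBH).
- by rewrite commgEr groupM // memJ_norm ?groupV // (subsetP nBH) // (subsetP sAH).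
Qed.

Lemma isoB : B \isog 'Alt_('I_4).
Proof. exact: isog_trans (isog_symr (conj_isog A t)) hA4. Qed.

Lemma AtV : A :^ t^-1 = B.
Proof.
have e : t^-1 = t * (t * t)^-1 by rewrite invMg mulgA mulgV mul1g.
by rewrite e conjsgM (normP (subsetP nBH _ _)) // groupV ttH.
Qed.

Lemma SylJ (K : {group gT}) (Q : {group gT}) x : x \in K -> Q \in 'Syl_3(K) -> (Q :^ x)%G \in 'Syl_3(K).
Proof. by move=> hx; rewrite !inE /= pHallJ. Qed.

Lemma centB h : h \in H -> (forall Q : {group gT}, Q \in 'Syl_3(B) -> h \in 'N(Q)) ->
  forall b, b \in B -> commute h b.
Proof.
move=> hH hQ b hb; apply/commgP/eqP; apply: (faithK isoB).
- rewrite commgEr groupM // memJ_norm ?groupV //; exact: (subsetP nBH).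
- move=> Q hQB; rewrite commgEl groupM ?groupV ?hQ //.
  have hQ' := SylJ (groupVr hb) hQB.
  by have := hQ _ hQ'; rewrite normJ mem_conjgV.
Qed.

Lemma KB h : h \in H -> (forall Q : {group gT}, Q \in 'Syl_3(B) -> h \in 'N(Q)) -> h \in A.
Proof.
move=> hH hQ; have cB := centB hH hQ.
apply/negPn/negP => hnA.
have hBA : B \subset 'N(A) by apply: subset_trans sBH nAH.
have hNA : h \in 'N(A) by apply: (subsetP nAH).
have hGx : h \in Gx by apply: (subsetP sHGx).
have [f injf imf] := isogP hS5.
pose z := coset A h.
have zGx : z \in Gx / A by apply: mem_quotient.
have cardBA : #|B / A| = 12.
  by rewrite -(card_isog (quotient_isog hBA tiAB)); apply: cardK isoB.
have zBA : z \notin B / A.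
  apply/negP => hz; have : h \in coset A @*^-1 (B / A) by apply: mem_morphpre.
  rewrite quotientK // => /mulsgP[a b ha hb eh].
  have cb : forall b', b' \in B -> commute b b'.
    move=> b' hb'; have -> : b = a^-1 * h by rewrite eh mulKg.
    apply: commute_sym; apply: commuteM; last exact/commute_sym/cB.
    by apply: commuteV; apply/commute_sym/cAB.
  have b1 : b = 1.
    apply: (faithK isoB) => // Q hQB; apply: (subsetP (cent_sub Q)).
    apply/centP => y hy; apply: cb.
    by move: hQB; rewrite inE => /pHall_sub/subsetP; apply.
  by move: hnA; rewrite eh b1 mulg1 ha.
have cz : forall w, w \in B / A -> commute w z.
  move=> w /morphimP[b hbN hbB ->].
  by rewrite /commute -!morphM // (cB b hbB).
pose J := <<(B / A) :|: [set z]>>.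
have sJC : J \subset 'C[z].
  rewrite gen_subG subUset sub1set cent1id andbT; apply/subsetP => w hw.
  by apply/cent1P; apply: cz.
have sJD : J \subset Gx / A.
  by rewrite gen_subG subUset sub1set zGx andbT quotientS // (subset_trans sBH sHGx).
have cJ : 24 <= #|J|.
  have sBJ : B / A \subset J by apply: sub_gen; apply: subsetUl.
  have zJ : z \in J by apply: mem_gen; rewrite !inE eqxx orbT.
  have lt : #|B / A| < #|J|.
    apply: proper_card; apply/properP; split => //; by exists z.
  have := cardSg sBJ; rewrite cardBA => /dvdnP[m em]; move: lt; rewrite cardBA em.
  case: m {em} => [|[|m]] // _.
have fz1 : f z != 1.
  rewrite morph_injm_eq1 //; apply/negP => /eqP ez.
  by move: zBA; rewrite ez group1.
have := S5cent fz1.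
have : #|J| <= #|'C[f z]|.
  rewrite -(card_injm injf sJD); apply: subset_leq_card; apply/subsetP => y.
  case/morphimP => w hwD hwJ ->; apply/cent1P.
  have wz := cent1P (subsetP sJC w hwJ).
  by rewrite /commute -!morphM // ?wz.
move=> le1 lt2; have := leq_trans cJ le1; by rewrite leqNgt lt2.
Qed.

Lemma KA h : h \in H -> (forall P : {group gT}, P \in 'Syl_3(A) -> h \in 'N(P)) -> h \in B.
Proof.
move=> hH hP; have hHt : h ^ t \in H := (tnH hH).1.
have : h ^ t \in A.
  apply: KB => // Q hQ.
  have hP' : (Q :^ t^-1)%G \in 'Syl_3(A).
    by rewrite inE /= -(pHallJ2 _ _ _ t) conjsgKV; move: hQ; rewrite inE.
  by have := hP _ hP'; rewrite -(memJ_conjg _ t) /= -normJ conjsgKV.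
by rewrite -AtV mem_conjgV.
Qed.

Local Notation SA := 'Syl_3(A).
Local Notation SB := 'Syl_3(B).

Lemma isoA : A \isog 'Alt_('I_4). Proof. exact: hA4. Qed.

Lemma SA_sub (P : {group gT}) : P \in SA -> (P \subset A) /\ #|P| = 3.
Proof. by rewrite (SylK isoA) => /andP[-> /eqP]. Qed.
Lemma SB_sub (P : {group gT}) : P \in SB -> (P \subset B) /\ #|P| = 3.
Proof. by rewrite (SylK isoB) => /andP[-> /eqP]. Qed.

Lemma disj (P : {group gT}) : P \in SA -> P \notin SB.
Proof.
move=> /SA_sub[sPA cP]; apply/negP => /SB_sub[sPB _].
have : P \subset A :&: B by rewrite subsetI sPA sPB.
by rewrite tiAB => /subset_leq_card; rewrite cards1 cP.
Qed.

Lemma SAJ h (P : {group gT}) : h \in H -> P \in SA -> (P :^ h)%G \in SA.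
Proof. by move=> hh; rewrite !inE /= pHallJnorm // (subsetP nAH). Qed.
Lemma SBJ h (P : {group gT}) : h \in H -> P \in SB -> (P :^ h)%G \in SB.
Proof. by move=> hh; rewrite !inE /= pHallJnorm // (subsetP nBH). Qed.
Lemma SAt (P : {group gT}) : P \in SA -> (P :^ t)%G \in SB.
Proof. by rewrite !inE /= pHallJ2. Qed.
Lemma SBt (Q : {group gT}) : Q \in SB -> (Q :^ t^-1)%G \in SA.
Proof. by move=> hQ; rewrite inE /= -(pHallJ2 _ _ _ t) conjsgKV; move: hQ; rewrite inE. Qed.

Lemma conjA_out g (P : {group gT}) : g \in Ge -> g \notin H -> P \in SA -> (P :^ g)%G \in SB.
Proof.
move=> hg hn hP.
have -> : (P :^ g)%G = ((P :^ (g * t^-1)) :^ t)%G by apply: val_inj; rewrite /= -conjsgM mulgKV.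
by apply: SAt; apply: SAJ => //; apply: cos1.
Qed.

Lemma conjB_out g (Q : {group gT}) : g \in Ge -> g \notin H -> Q \in SB -> (Q :^ g)%G \in SA.
Proof.
move=> hg hn hQ.
have -> : (Q :^ g)%G = ((Q :^ t^-1) :^ (t * g))%G by apply: val_inj; rewrite /= -conjsgM mulKg.
by apply: SAJ; [apply: cos2 | apply: SBt].
Qed.

Definition sA := enum SA.
Lemma size_sA : size sA = 4.
Proof. by rewrite /sA -cardE (card_SylK isoA). Qed.

Definition pnt (i : 'I_8) : {group gT} :=
  if i < 4 then nth 1%G sA i else (nth 1%G sA (i - 4) :^ t)%G.

Lemma pntA (i : 'I_8) : i < 4 -> pnt i \in SA.
Proof. by move=> hi; rewrite /pnt hi -mem_enum mem_nth // size_sA. Qed.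

Lemma lt_sub4 (i : 'I_8) : i - 4 < 4.
Proof. by have := ltn_ord i; lia. Qed.

Lemma pntB (i : 'I_8) : ~~ (i < 4) -> pnt i \in SB.
Proof.
move=> hi; rewrite /pnt (negbTE hi); apply: SAt.
by rewrite -mem_enum mem_nth // size_sA lt_sub4.
Qed.

Lemma surjA (P : {group gT}) : P \in SA -> exists i : 'I_8, (i < 4) && (pnt i == P).
Proof.
move=> hP; have hi : index P sA < 4 by rewrite -size_sA index_mem mem_enum.
exists (inord (index P sA)); rewrite /pnt inordK ?hi ?(ltn_trans hi) //=.
by rewrite nth_index // mem_enum.
Qed.

Lemma surjB (Q : {group gT}) : Q \in SB -> exists i : 'I_8, ~~ (i < 4) && (pnt i == Q).
Proof.
move=> hQ; set P := (Q :^ t^-1)%G; have hP : P \in SA by apply: SBt.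
have hi : index P sA < 4 by rewrite -size_sA index_mem mem_enum.
have hi8 : index P sA + 4 < 8 by rewrite -(ltn_add2r 4) in hi.
exists (inord (index P sA + 4)); rewrite /pnt inordK //.
have -> : (index P sA + 4 < 4) = false by rewrite ltnNge leq_addl.
rewrite /= addnK nth_index ?mem_enum //; apply/eqP/val_inj; by rewrite /= conjsgKV.
Qed.

Lemma pnt_inj : injective pnt.
Proof.
have hnth : forall i j, i < 4 -> j < 4 -> nth 1%G sA i = nth 1%G sA j -> i = j.
  move=> i j hi hj e; apply/eqP; rewrite -(nth_uniq 1%G _ _ (enum_uniq (mem SA))) ?size_sA //.
  by rewrite -/sA e.
move=> i j e; apply/val_inj.
case hi : (i < 4); case hj : (j < 4).
- by move: e; rewrite /pnt hi hj => /hnth; apply.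
- by have := pntA hi; rewrite e => /disj; rewrite pntB ?hj.
- by have := pntA hj; rewrite -e => /disj; rewrite pntB ?hi.
- move: e; rewrite /pnt hi hj => /(congr1 val) /= /conjsg_inj e.
  have {e} : nth 1%G sA (i - 4) = nth 1%G sA (j - 4) by apply: val_inj.
  move/hnth.
  move/(_ (lt_sub4 i) (lt_sub4 j)) => e.
  by move: hi hj e; lia.
Qed.

Lemma pnt_act g i : g \in Ge ->
  exists j : 'I_8, (pnt j == (pnt i :^ g)%G) && ((j < 4) == ((i < 4) == (g \in H))).
Proof.
move=> hg; case hi: (i < 4); case hgH: (g \in H).
- by case/surjA: (SAJ hgH (pntA hi)) => j /andP[hj e]; exists j; rewrite e hj.
- case/surjB: (conjA_out hg (negbT hgH) (pntA hi)) => j /andP[hj e]; exists j.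
  by rewrite e (negbTE hj).
- case/surjB: (SBJ hgH (pntB (negbT hi))) => j /andP[hj e]; exists j.
  by rewrite e (negbTE hj).
- by case/surjA: (conjB_out hg (negbT hgH) (pntB (negbT hi))) => j /andP[hj e]; exists j; rewrite e hj.
Qed.

Definition F g i := odflt i [pick j | pnt j == (pnt i :^ g)%G].

Lemma FP g i : g \in Ge -> (pnt (F g i) = (pnt i :^ g)%G) /\ ((F g i < 4) = ((i < 4) == (g \in H))).
Proof.
move=> hg; have [j /andP[/eqP ej /eqP bj]] := pnt_act i hg.
rewrite /F; case: pickP => [k /eqP ek | hn] /=; last by have := hn j; rewrite ej eqxx.
have -> : k = j by apply: pnt_inj; rewrite ek ej.
by split.
Qed.

Lemma F_inj g : g \in Ge -> injective (F g).
Proof.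
move=> hg i j e; apply: pnt_inj.
have := (FP i hg).1; rewrite e (FP j hg).1 => /(congr1 val) /= /conjsg_inj e2.
by apply: val_inj.
Qed.

Definition mkperm (f : 'I_8 -> 'I_8) : {perm 'I_8} :=
  match injectiveP f with ReflectT Hf => perm Hf | ReflectF _ => 1 end.

Lemma mkpermE f : injective f -> mkperm f =1 f.
Proof. by move=> hf; rewrite /mkperm; case: injectiveP => // hf' x; rewrite permE. Qed.

Definition phi g := mkperm (F g).

Lemma phiE g i : g \in Ge -> phi g i = F g i.
Proof. by move=> hg; rewrite /phi mkpermE //; apply: F_inj. Qed.

Lemma phiM : {in Ge &, {morph phi : x y / x * y}}.
Proof.
move=> x y hx hy; apply/permP => i; rewrite permM !phiE ?groupM //.
apply: pnt_inj; rewrite (FP _ (groupM hx hy)).1 (FP _ hy).1 (FP _ hx).1.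
by apply: val_inj; rewrite /= conjsgM.
Qed.

Definition phim : {morphism Ge >-> {perm 'I_8}} := Morphism phiM.

Lemma phimE g : phim g = phi g. Proof. by []. Qed.

Lemma phi_blk g i : g \in Ge -> (phi g i < 4) = ((i < 4) == (g \in H)).
Proof. by move=> hg; rewrite phiE // (FP i hg).2. Qed.

Lemma phi_fixN g i : g \in Ge -> phi g i = i -> g \in 'N(pnt i).
Proof.
move=> hg e; apply/normP; have := (FP i hg).1; rewrite -phiE // e.
by move/(congr1 val).
Qed.

Lemma phi1 g : g \in Ge -> phi g = 1 -> g = 1.
Proof.
move=> hg e; have fx : forall i, phi g i = i by move=> i; rewrite e perm1.
have gH : g \in H.
  by have := phi_blk (ord0 : 'I_8) hg; rewrite fx /= => /esym/eqP.
have gA : g \in A.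
  apply: KB => // Q /surjB[i /andP[_ /eqP <-]]; exact: phi_fixN.
have gB : g \in B.
  apply: KA => // P /surjA[i /andP[_ /eqP <-]]; exact: phi_fixN.
by have := tiAB; move/setP/(_ g); rewrite !inE gA gB => /esym/eqP.
Qed.

Lemma injphi : 'injm phim.
Proof.
apply/injmP => x y hx hy e; apply/eqP; rewrite eq_mulgV1; apply/eqP.
apply: phi1; first by rewrite groupM ?groupV.
by rewrite -phimE morphM ?groupV // morphV // e mulgV.
Qed.

Lemma phiA a (i : 'I_8) : a \in A -> ~~ (i < 4) -> phi a i = i.
Proof.
move=> ha hi; have hg : a \in Ge by apply: (subsetP sHGe); apply: (subsetP sAH).
apply: pnt_inj; rewrite phiE // (FP i hg).1; apply: val_inj => /=; apply/normP.
apply: (subsetP (cent_sub _)); apply/centP => y hy; apply: cAB => //.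
by have [sB _] := SB_sub (pntB hi); apply: (subsetP sB).
Qed.

Lemma phiB b (i : 'I_8) : b \in B -> i < 4 -> phi b i = i.
Proof.
move=> hb hi; have hg : b \in Ge by apply: (subsetP sHGe); apply: (subsetP sBH).
apply: pnt_inj; rewrite phiE // (FP i hg).1; apply: val_inj => /=; apply/normP.
apply: (subsetP (cent_sub _)); apply/centP => y hy; apply/commute_sym/cAB => //.
by have [sA _] := SA_sub (pntA hi); apply: (subsetP sA).
Qed.

Lemma AGe : A \subset Ge. Proof. exact: subset_trans sAH sHGe. Qed.
Lemma BGe : B \subset Ge. Proof. exact: subset_trans sBH sHGe. Qed.

Local Notation A0 := <<[set x in SA0]>>.
Local Notation B0 := <<[set x in SB0]>>.
Local Notation W1 := <<[set x in SW1]>>.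
Local Notation W2 := <<[set x in SW2]>>.
Local Notation E0 := <<[set x in SE]>>.

Lemma phiA_W1 : phim @* A \subset W1.
Proof.
apply/subsetP => y /morphimP[a _ ha ->]; rewrite phimE (W1_facts.2).
have hg : a \in Ge by apply: (subsetP AGe).
have haH : a \in H by apply: (subsetP sAH).
have : code (phi a) \in [seq x ++ iota 4 4 | x <- permutations (iota 0 4)].
  apply: code_fixhi => i hi; first by rewrite phi_blk // hi haH.
  exact: phiA.
by move/(allP chk_W1).
Qed.

Lemma phiB_W2 : phim @* B \subset W2.
Proof.
apply/subsetP => y /morphimP[b _ hb ->]; rewrite phimE (W2_facts.2).
have hg : b \in Ge by apply: (subsetP BGe).
have hbH : b \in H by apply: (subsetP sBH).
have : code (phi b) \in [seq iota 0 4 ++ y | y <- permutations (iota 4 4)].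
  apply: code_fixlo => i hi; first by rewrite phi_blk // (negbTE hi) hbH.
  exact: phiB.
by move/(allP chk_W2).
Qed.

Lemma card_phiA : #|phim @* A| = 12.
Proof. by rewrite card_injm ?injphi ?AGe // cardA. Qed.
Lemma card_phiB : #|phim @* B| = 12.
Proof. by rewrite card_injm ?injphi ?BGe //; apply: cardK isoB. Qed.

Lemma cube_code (c : {perm 'I_8}) : cmul (code c) (cmul (code c) (code c)) = idc 7 -> c ^+ 3 = 1.
Proof. by move=> h; apply: (@code_inj 7); rewrite !expgS expg0 mulg1 !codeM code1 h. Qed.

Lemma A0_phiA : A0 \subset phim @* A.
Proof.
rewrite gen_subG; apply/subsetP => x; rewrite inE !in_cons orbF => /orP[] /eqP ->.
- apply: (idx2_3 phiA_W1); first by rewrite card_phiA (W1_facts.1).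
  + by rewrite (W1_facts.2) code_cyc //; vm_compute.
  + by apply: cube_code; rewrite code_cyc //; vm_compute.
- apply: (idx2_3 phiA_W1); first by rewrite card_phiA (W1_facts.1).
  + by rewrite (W1_facts.2) code_cyc //; vm_compute.
  + by apply: cube_code; rewrite code_cyc //; vm_compute.
Qed.

Lemma B0_phiB : B0 \subset phim @* B.
Proof.
rewrite gen_subG; apply/subsetP => x; rewrite inE !in_cons orbF => /orP[] /eqP ->.
- apply: (idx2_3 phiB_W2); first by rewrite card_phiB (W2_facts.1).
  + by rewrite (W2_facts.2) code_cyc //; vm_compute.
  + by apply: cube_code; rewrite code_cyc //; vm_compute.
- apply: (idx2_3 phiB_W2); first by rewrite card_phiB (W2_facts.1).
  + by rewrite (W2_facts.2) code_cyc //; vm_compute.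
  + by apply: cube_code; rewrite code_cyc //; vm_compute.
Qed.

Lemma phiA_A0 : phim @* A = A0.
Proof.
apply/eqP; rewrite eq_sym eqEcard A0_phiA card_phiA (A0_facts.1) //.
Qed.
Lemma phiB_B0 : phim @* B = B0.
Proof.
apply/eqP; rewrite eq_sym eqEcard B0_phiB card_phiB (B0_facts.1) //.
Qed.

Lemma E0_phiH : E0 \subset phim @* H.
Proof.
rewrite gen_subG; apply/subsetP => x; rewrite inE mem_cat => /orP[] hx.
- apply: (subsetP (morphimS _ sAH)); rewrite phiA_A0; apply: mem_gen; by rewrite inE.
- apply: (subsetP (morphimS _ sBH)); rewrite phiB_B0; apply: mem_gen; by rewrite inE.
Qed.

Lemma phiH_L h : h \in H -> (phi h \in L1) && (phi h \in L2).
Proof.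
move=> hH; have hg : h \in Ge by apply: (subsetP sHGe).
have cb : code (phi h) \in blkcodes.
  by apply: code_blk => i; rewrite phi_blk // hH eqb_id.
case/or3P: (allP chk_blk _ cb) => [/andP[c1 c2]| /hasP[e he /andP[/eqP hd hn]] | /hasP[e he /andP[/eqP hd hn]]].
- by apply/andP; split; [rewrite (L1_facts.2); exact: c1 | rewrite (L2_facts.2); exact: c2].
- have [w hw ew] := lE_real he.
  have [n _ nH wn] := morphimP (subsetP E0_phiH w hw).
  have nGe : n \in Ge by apply: (subsetP sHGe).
  have hnH : h * n \in H by rewrite groupM.
  have ec : code (phi (h * n)) = cmul (code (phi h)) e.
    by rewrite -(phimE (h * n)) (morphM phim hg nGe) codeM -ew wn (phimE h).
  have hnX : h * n \in A.
    apply: (KB hnH) => Q /surjB[i /andP[hi /eqP <-]].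
    apply: (phi_fixN (groupM hg nGe)); apply: (fix_hi _ hi); rewrite ec; exact: hd.
  have := mem_morphim phim (groupM hg nGe) hnX.
  rewrite phiA_A0 (A0_facts.2) phimE ec (negbTE hn); done.
- have [w hw ew] := lE_real he.
  have [n _ nH wn] := morphimP (subsetP E0_phiH w hw).
  have nGe : n \in Ge by apply: (subsetP sHGe).
  have hnH : h * n \in H by rewrite groupM.
  have ec : code (phi (h * n)) = cmul (code (phi h)) e.
    by rewrite -(phimE (h * n)) (morphM phim hg nGe) codeM -ew wn (phimE h).
  have hnX : h * n \in B.
    apply: (KA hnH) => Q /surjA[i /andP[hi /eqP <-]].
    apply: (phi_fixN (groupM hg nGe)); apply: (fix_lo _ hi); rewrite ec; exact: hd.
  have := mem_morphim phim (groupM hg nGe) hnX.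
  rewrite phiB_B0 (B0_facts.2) phimE ec (negbTE hn); done.
Qed.

Lemma phit_L : (phi t \in L1) || (phi t \in L2).
Proof.
have cs : code (phi t) \in swpcodes.
  by apply: code_swp => i; rewrite phi_blk ?tGe // (negbTE tNH) eqbF_neg negbK.
rewrite (L1_facts.2) (L2_facts.2); exact: (allP chk_swp _ cs).
Qed.

Lemma final_L (L : {group {perm 'I_8}}) : #|L| = 576 ->
  (forall h, h \in H -> phi h \in L) -> phi t \in L -> Ge \isog L.
Proof.
move=> cL hH ht'.
have sub : phim @* Ge \subset L.
  apply/subsetP => y /morphimP[g _ hg ->]; rewrite phimE.
  case hgH : (g \in H); first exact: hH.
  have e : g = t * (t^-1 * g) by rewrite mulKVg.
  have h' : t^-1 * g \in H by apply: cos3 => //; rewrite hgH.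
  rewrite e -phimE morphM ?tGe ?(subsetP sHGe) // groupM //; exact: hH.
have eq : phim @* Ge = L.
  apply/eqP; rewrite eqEcard sub cL card_injm ?injphi // cardGe //.
rewrite -eq; exact: sub_isog (subxx _) injphi.
Qed.

Lemma main_result : Ge \isog L1 \/ Ge \isog L2.
Proof.
have c1 : #|<<[set x in S1]>>| = 576 by rewrite -L1E; exact: L1_facts.1.
have c2 : #|<<[set x in S2]>>| = 576 by rewrite -L2E; exact: L2_facts.1.
have m1 : forall p, p \in L1 -> p \in <<[set x in S1]>> by rewrite -L1E.
have m2 : forall p, p \in L2 -> p \in <<[set x in S2]>> by rewrite -L2E.
case/orP: phit_L => ht'.
- left; rewrite L1E; apply: final_L; first exact: c1.
  + by move=> h hh; case/andP: (phiH_L hh) => /m1.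
  + exact: m1.
- right; rewrite L2E; apply: final_L; first exact: c2.
  + by move=> h hh; case/andP: (phiH_L hh) => _ /m2.
  + exact: m2.
Qed.

End Main.


Theorem lemma5p8 (gT : finGroupType) (Gx Ge : {group gT}) (t : gT) :
  primitive_amalgam Gx Ge ->
  #|Gx : Gxy Gx Ge| = 5%N ->
  #|Ge : Gxy Gx Ge| = 2%N ->
  t \in Ge :\: Gx ->
  Gxy1 Gx Ge t = 1 ->
  Gx / Gx1 Gx Ge \isog 'Sym_('I_5) ->
  Gx1 Gx Ge \isog 'Alt_('I_4) ->
  Ge \isog L1 \/ Ge \isog L2.
Proof.
move=> _ hix hie ht h1 hS5 hA4.
exact: (main_result hix hie ht h1 hS5 hA4).
Qed.
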